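(* Consider the classical spin triangle with Heisenberg Hamiltonian $H(\mathbf{s})=J_1\,\mathbf{s}_2\cdot\mathbf{s}_3+J_2\,\mathbf{s}_3\cdot\mathbf{s}_1+J_3\,\mathbf{s}_1\cdot\mathbf{s}_2$ with unit spin vectors $\mathbf{s}_1,\mathbf{s}_2,\mathbf{s}_3$, and write the Gram matrix of a spin configuration as $G=\begin{pmatrix}1&u&v\\ u&1&w\\ v&w&1\end{pmatrix}$, i.e. $u=\mathbf{s}_1\cdot\mathbf{s}_2$, $v=\mathbf{s}_1\cdot\mathbf{s}_3$, $w=\mathbf{s}_2\cdot\mathbf{s}_3$, so that $H=J_1 w+J_2 v+J_3 u$ and $\det G=1+2uvw-(u^2+v^2+w^2)$. Let $\mathbf{J}=(J_1,J_2,J_3)$ and let $\mathbf{E}_0=(1,1,1)$, $\mathbf{E}_1=(1,-1,-1)$, $\mathbf{E}_2=(-1,1,-1)$, $\mathbf{E}_3=(-1,-1,1)$ be the coordinate vectors $(w,v,u)$ of the four Ising Gram matrices. If $\mathbf{J}$ satisfies none of the four conditions $\mathbf{J}\cdot\mathbf{E}_i\le-\|\mathbf{J}\|$ ($i=0,1,2,3$), then the ground states are co-planar, with $\det G=0$ and $-1<u,v,w<1$, and $\mathbf{J}$ is proportional to the gradient of $\mathcal{D}=\det G$: $J_1=2\mu(uv-w)$, $J_2=2\mu(wu-v)$, $J_3=2\mu(vw-u)$. Solving these together with $\mathcal{D}=0$ gives $$u=\frac{J_1}{2J_2}\Big(\frac{J_2^2}{J_3^2}-1\Big)-\frac{J_2}{2J_1},\quad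 v=\frac{J_1}{2J_3}\Big(\frac{J_3^2}{J_2^2}-1\Big)-\frac{J_3}{2J_1},\quad w=\frac{J_2}{2J_3}\Big(\frac{J_3^2}{J_1^2}-1\Big)-\frac{J_3}{2J_2},$$ $$\mu=\frac{-2J_1^3J_2^3J_3^3}{J_1^4(J_2^2-J_3^2)^2-2J_1^2J_2^2J_3^2(J_2^2+J_3^2)+J_2^4J_3^4},$$ and the ground state energy is $E_{min}=J_1w+J_2v+J_3u$.
   Context: Classical spin triangle ($N=3$); Gram set $\mathcal{G}=\{G\ge 0,\ G_{\mu\mu}=1\}$ parametrized by $(u,v,w)$; ground states correspond to boundary points of $\mathcal{G}$ where the affine functional $(u,v,w)\mapsto J_1w+J_2v+J_3u$ is minimal. *)

(* Defs.v *)
From Stdlib Require Import Reals.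
Open Scope R_scope.

Definition vec3 : Type := (R * R * R)%type.

Definition dot (a b : vec3) : R :=
  let '(a1, a2, a3) := a in let '(b1, b2, b3) := b in a1 * b1 + a2 * b2 + a3 * b3.

Definition vnorm (a : vec3) : R := sqrt (dot a a).

Definition unit_vec (s : vec3) : Prop := dot s s = 1.

Definition energy (J : vec3) (s1 s2 s3 : vec3) : R :=
  let '(J1, J2, J3) := J in J1 * dot s2 s3 + J2 * dot s3 s1 + J3 * dot s1 s2.

Definition ground_state (J : vec3) (s1 s2 s3 : vec3) : Prop :=
  unit_vec s1 /\ unit_vec s2 /\ unit_vec s3 /\
  forall t1 t2 t3 : vec3, unit_vec t1 -> unit_vec t2 -> unit_vec t3 ->
    energy J s1 s2 s3 <= energy J t1 t2 t3.

Definition coplanar (s1 s2 s3 : vec3) : Prop :=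
  exists n : vec3, n <> (0, 0, 0) /\ dot n s1 = 0 /\ dot n s2 = 0 /\ dot n s3 = 0.

(* det of the Gram matrix [[1,u,v],[u,1,w],[v,w,1]] *)
Definition detG (u v w : R) : R := 1 + 2 * u * v * w - (u ^ 2 + v ^ 2 + w ^ 2).

(* coordinate vectors (w,v,u) of the four Ising Gram matrices *)
Definition Eising0 : vec3 := (1, 1, 1).
Definition Eising1 : vec3 := (1, -1, -1).
Definition Eising2 : vec3 := (-1, 1, -1).
Definition Eising3 : vec3 := (-1, -1, 1).

Definition ising_condition (J E : vec3) : Prop := dot J E <= - vnorm J.

Definition u_formula (J1 J2 J3 : R) : R :=
  J1 / (2 * J2) * (J2 ^ 2 / J3 ^ 2 - 1) - J2 / (2 * J1).
Definition v_formula (J1 J2 J3 : R) : R :=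
  J1 / (2 * J3) * (J3 ^ 2 / J2 ^ 2 - 1) - J3 / (2 * J1).
Definition w_formula (J1 J2 J3 : R) : R :=
  J2 / (2 * J3) * (J3 ^ 2 / J1 ^ 2 - 1) - J3 / (2 * J2).
Definition mu_formula (J1 J2 J3 : R) : R :=
  - 2 * J1 ^ 3 * J2 ^ 3 * J3 ^ 3 /
  (J1 ^ 4 * (J2 ^ 2 - J3 ^ 2) ^ 2 - 2 * J1 ^ 2 * J2 ^ 2 * J3 ^ 2 * (J2 ^ 2 + J3 ^ 2)
   + J2 ^ 4 * J3 ^ 4).

(* Main.v *)
Require Import Defs.
From Stdlib Require Import Reals Lra Psatz.
Open Scope R_scope.

Definition Kp (J1 J2 J3 : R) : R :=
  2*((J2*J3)^2*(J1*J3)^2 + (J2*J3)^2*(J1*J2)^2 + (J1*J3)^2*(J1*J2)^2)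
  - ((J2*J3)^4 + (J1*J3)^4 + (J1*J2)^4).

Lemma Lcore (a b c : R) : 0<a -> 0<b -> 0<c ->
  (a - b - c > 0 \/ b*c - a*b - a*c < 0) -> b*c - a*b - a*c < 0.
Proof. intros ha hb hc [h|h]; [nra|lra]. Qed.


Lemma prod_pos (J1 J2 J3 : R) (F0 : J1+J2+J3 > 0 \/ J1*J2+J1*J3+J2*J3 < 0)
  (F1 : J1-J2-J3 > 0 \/ J2*J3-J1*J2-J1*J3 < 0)
  (F2 : -J1+J2-J3 > 0 \/ J1*J3-J1*J2-J2*J3 < 0)
  (F3 : -J1-J2+J3 > 0 \/ J1*J2-J1*J3-J2*J3 < 0) : 0 < J1*J2*J3.
Proof.
  destruct (Rtotal_order J1 0) as [a|[a|a]];
  destruct (Rtotal_order J2 0) as [b|[b|b]];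
  destruct (Rtotal_order J3 0) as [c|[c|c]];
  try subst;
  first [ nra | (destruct F0; nra) | (destruct F1; nra) | (destruct F2; nra) | (destruct F3; nra) ].
Qed.

Lemma K_pos (J1 J2 J3 : R) (F0 : J1+J2+J3 > 0 \/ J1*J2+J1*J3+J2*J3 < 0)
  (F1 : J1-J2-J3 > 0 \/ J2*J3-J1*J2-J1*J3 < 0)
  (F2 : -J1+J2-J3 > 0 \/ J1*J3-J1*J2-J2*J3 < 0)
  (F3 : -J1-J2+J3 > 0 \/ J1*J2-J1*J3-J2*J3 < 0) : 0 < Kp J1 J2 J3.
Proof.
  pose proof (prod_pos J1 J2 J3 F0 F1 F2 F3) as hp.
  assert (hK : Kp J1 J2 J3 = - ((J1*J2+J1*J3+J2*J3)*(J2*J3-J1*J2-J1*J3)*(J1*J3-J1*J2-J2*J3)*(J1*J2-J1*J3-J2*J3))) by (unfold Kp; ring).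
  rewrite hK.
  destruct (Rlt_or_le 0 J1) as [a|a];
  destruct (Rlt_or_le 0 J2) as [b|b];
  destruct (Rlt_or_le 0 J3) as [c|c]; try (exfalso; nra).
  -
    pose proof (Lcore J1 J2 J3 a b c ltac:(destruct F1; [left; lra|right; nra])) as h1.
    pose proof (Lcore J2 J1 J3 b a c ltac:(destruct F2; [left; lra|right; nra])) as h2.
    pose proof (Lcore J3 J1 J2 c a b ltac:(destruct F3; [left; lra|right; nra])) as h3.
    assert (h0 : 0 < J1*J2+J1*J3+J2*J3) by nra.
    assert (q : 0 < (J1*J2+J1*J3+J2*J3)*(J1*J2+J1*J3-J2*J3)) by nra.
    assert (q2 : 0 < (J1*J3-J1*J2-J2*J3)*(J1*J2-J1*J3-J2*J3)) by nra.
    nra.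
  -
    assert (b' : J2 < 0) by nra. assert (c' : J3 < 0) by nra.
    pose proof (Lcore J1 (-J2) (-J3) a ltac:(lra) ltac:(lra) ltac:(destruct F0; [left; lra|right; nra])) as h1.
    pose proof (Lcore (-J2) J1 (-J3) ltac:(lra) a ltac:(lra) ltac:(destruct F3; [left; lra|right; nra])) as h2.
    pose proof (Lcore (-J3) J1 (-J2) ltac:(lra) a ltac:(lra) ltac:(destruct F2; [left; lra|right; nra])) as h3.
    assert (h0 : 0 < J2*J3-J1*J2-J1*J3) by nra.
    assert (q : (J1*J2+J1*J3+J2*J3)*(J2*J3-J1*J2-J1*J3) < 0) by nra.
    assert (q2 : 0 < (J1*J3-J1*J2-J2*J3)*(J1*J2-J1*J3-J2*J3)) by nra.
    nra.
  -
    assert (a' : J1 < 0) by nra. assert (c' : J3 < 0) by nra.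
    pose proof (Lcore J2 (-J1) (-J3) b ltac:(lra) ltac:(lra) ltac:(destruct F0; [left; lra|right; nra])) as h1.
    pose proof (Lcore (-J1) J2 (-J3) ltac:(lra) b ltac:(lra) ltac:(destruct F3; [left; lra|right; nra])) as h2.
    pose proof (Lcore (-J3) J2 (-J1) ltac:(lra) b ltac:(lra) ltac:(destruct F1; [left; lra|right; nra])) as h3.
    assert (h0 : 0 < J1*J3-J1*J2-J2*J3) by nra.
    assert (q : (J1*J2+J1*J3+J2*J3)*(J2*J3-J1*J2-J1*J3) > 0) by nra.
    assert (q2 : (J1*J3-J1*J2-J2*J3)*(J1*J2-J1*J3-J2*J3) < 0) by nra.
    nra.
  -
    assert (a' : J1 < 0) by nra. assert (b' : J2 < 0) by nra.
    pose proof (Lcore J3 (-J1) (-J2) c ltac:(lra) ltac:(lra) ltac:(destruct F0; [left; lra|right; nra])) as h1.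
    pose proof (Lcore (-J1) J3 (-J2) ltac:(lra) c ltac:(lra) ltac:(destruct F2; [left; lra|right; nra])) as h2.
    pose proof (Lcore (-J2) J3 (-J1) ltac:(lra) c ltac:(lra) ltac:(destruct F1; [left; lra|right; nra])) as h3.
    assert (h0 : 0 < J1*J2-J1*J3-J2*J3) by nra.
    assert (q : (J1*J2+J1*J3+J2*J3)*(J2*J3-J1*J2-J1*J3) > 0) by nra.
    assert (q2 : (J1*J3-J1*J2-J2*J3)*(J1*J2-J1*J3-J2*J3) < 0) by nra.
    nra.
Qed.

Lemma test1 J1 J2 J3 : J1 <> 0 -> J2 <> 0 -> J3 <> 0 ->
  1 - (u_formula J1 J2 J3)^2 = Kp J1 J2 J3 / (4*(J2*J3)^2*(J1*J3)^2).
Proof. intros. unfold u_formula, Kp. field. auto. Qed.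
Lemma test2 J1 J2 J3 : J1 <> 0 -> J2 <> 0 -> J3 <> 0 ->
  1 - (v_formula J1 J2 J3)^2 = Kp J1 J2 J3 / (4*(J2*J3)^2*(J1*J2)^2).
Proof. intros. unfold v_formula, Kp. field. auto. Qed.
Lemma test3 J1 J2 J3 : J1 <> 0 -> J2 <> 0 -> J3 <> 0 ->
  1 - (w_formula J1 J2 J3)^2 = Kp J1 J2 J3 / (4*(J1*J3)^2*(J1*J2)^2).
Proof. intros. unfold w_formula, Kp. field. auto. Qed.
Lemma testdet J1 J2 J3 : J1 <> 0 -> J2 <> 0 -> J3 <> 0 ->
  detG (u_formula J1 J2 J3) (v_formula J1 J2 J3) (w_formula J1 J2 J3) = 0.
Proof. intros. unfold detG, u_formula, v_formula, w_formula. field. auto. Qed.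

Definition comb (p q r : R) (a b c : vec3) : vec3 :=
  let '(a1,a2,a3) := a in let '(b1,b2,b3) := b in let '(c1,c2,c3) := c in
  (p*a1+q*b1+r*c1, p*a2+q*b2+r*c2, p*a3+q*b3+r*c3).
Definition cross (a b : vec3) : vec3 :=
  let '(a1,a2,a3) := a in let '(b1,b2,b3) := b in
  (a2*b3-a3*b2, a3*b1-a1*b3, a1*b2-a2*b1).

Lemma dot_comm a b : dot a b = dot b a.
Proof. destruct a as [[a1 a2] a3], b as [[b1 b2] b3]; simpl; ring. Qed.
Lemma dot_comb_l p q r a b c x :
  dot (comb p q r a b c) x = p*dot a x + q*dot b x + r*dot c x.
Proof. destruct a as [[a1 a2] a3], b as [[b1 b2] b3], c as [[c1 c2] c3], x as [[x1 x2] x3]; simpl; ring. Qed.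
Lemma dot_self_nonneg x : 0 <= dot x x.
Proof. destruct x as [[x1 x2] x3]; simpl; nra. Qed.
Lemma dot_self_zero x y : dot x x = 0 -> dot x y = 0.
Proof. destruct x as [[x1 x2] x3], y as [[y1 y2] y3]; simpl; intro h.
  assert (x1 = 0) by nra. assert (x2 = 0) by nra. assert (x3 = 0) by nra. subst; ring. Qed.
Lemma cross_l a b : dot (cross a b) a = 0.
Proof. destruct a as [[a1 a2] a3], b as [[b1 b2] b3]; simpl; ring. Qed.
Lemma cross_r a b : dot (cross a b) b = 0.
Proof. destruct a as [[a1 a2] a3], b as [[b1 b2] b3]; simpl; ring. Qed.
Lemma cross_norm a b : dot (cross a b) (cross a b) = dot a a * dot b b - (dot a b)^2.
Proof. destruct a as [[a1 a2] a3], b as [[b1 b2] b3]; simpl; ring. Qed.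

Lemma energy_eq J1 J2 J3 s1 s2 s3 :
  energy (J1,J2,J3) s1 s2 s3 = J1*dot s2 s3 + J2*dot s1 s3 + J3*dot s1 s2.
Proof. unfold energy. rewrite (dot_comm s3 s1). reflexivity. Qed.

Lemma Fgen (d S : R) : 0 <= S -> ~ (d <= - sqrt S) -> d > 0 \/ d*d < S.
Proof.
  intros hS h. apply Rnot_le_lt in h. destruct (Rlt_or_le 0 d); [left; lra|right].
  pose proof (sqrt_sqrt S hS). pose proof (sqrt_pos S). nra.
Qed.

Lemma lin_unique A1 J2 J3 x y z : A1<>0 -> J2<>0 -> J3<>0 ->
  J3*x+J2*y=0 -> A1*x+J2*z=0 -> A1*y+J3*z=0 -> x=0/\y=0/\z=0.
Proof.
  intros a b c e1 e2 e3.
  assert (hx : 2*A1*J3*x = A1*(J3*x+J2*y) + J3*(A1*x+J2*z) - J2*(A1*y+J3*z)) by ring.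
  rewrite e1, e2, e3 in hx.
  assert (x = 0).
  { assert (2*A1*J3 <> 0) by (repeat apply Rmult_integral_contrapositive_currified; auto; lra).
    apply (Rmult_eq_reg_l (2*A1*J3)); [lra|auto]. }
  subst x. split; [reflexivity|].
  split.
  - apply (Rmult_eq_reg_l J2); [lra|auto].
  - apply (Rmult_eq_reg_l J2); [lra|auto].
Qed.

Lemma sq_pos x : x <> 0 -> 0 < x^2.
Proof. intro h. pose proof (Rsqr_pos_lt x h). unfold Rsqr in *. simpl. lra. Qed.

Ltac sidec H := repeat split; auto;
  match goal with |- ?X <> 0 => let E := fresh in intro E; apply H; transitivity X; [ring|exact E] end.
Lemma mu1 J1 J2 J3 : J1 <> 0 -> J2 <> 0 -> J3 <> 0 ->
 J1 ^ 4 * (J2 ^ 2 - J3 ^ 2) ^ 2 - 2 * J1 ^ 2 * J2 ^ 2 * J3 ^ 2 * (J2 ^ 2 + J3 ^ 2) + J2 ^ 4 * J3 ^ 4 <> 0 ->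
 J1 = 2 * mu_formula J1 J2 J3 * (u_formula J1 J2 J3 * v_formula J1 J2 J3 - w_formula J1 J2 J3) /\
 J2 = 2 * mu_formula J1 J2 J3 * (w_formula J1 J2 J3 * u_formula J1 J2 J3 - v_formula J1 J2 J3) /\
 J3 = 2 * mu_formula J1 J2 J3 * (v_formula J1 J2 J3 * w_formula J1 J2 J3 - u_formula J1 J2 J3).
Proof. intros h1 h2 h3 hD. unfold mu_formula, u_formula, v_formula, w_formula.
  split; [|split]; field; sidec hD.
Qed.

Lemma bnd x : 0 < 1 - x^2 -> -1 < x < 1.
Proof. intro h. split; nra. Qed.

Theorem mainTheorem2 (J1 J2 J3 : R) :
  ~ ising_condition (J1, J2, J3) Eising0 ->
  ~ ising_condition (J1, J2, J3) Eising1 ->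
  ~ ising_condition (J1, J2, J3) Eising2 ->
  ~ ising_condition (J1, J2, J3) Eising3 ->
  (exists s1 s2 s3 : vec3, ground_state (J1, J2, J3) s1 s2 s3) /\
  forall s1 s2 s3 : vec3, ground_state (J1, J2, J3) s1 s2 s3 ->
    let u := dot s1 s2 in
    let v := dot s1 s3 in
    let w := dot s2 s3 in
    coplanar s1 s2 s3 /\
    detG u v w = 0 /\
    (-1 < u < 1) /\ (-1 < v < 1) /\ (-1 < w < 1) /\
    (exists mu : R,
        J1 = 2 * mu * (u * v - w) /\
        J2 = 2 * mu * (w * u - v) /\
        J3 = 2 * mu * (v * w - u) /\
        mu = mu_formula J1 J2 J3) /\
    u = u_formula J1 J2 J3 /\
    v = v_formula J1 J2 J3 /\
    w = w_formula J1 J2 J3 /\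
    energy (J1, J2, J3) s1 s2 s3
      = J1 * w_formula J1 J2 J3 + J2 * v_formula J1 J2 J3 + J3 * u_formula J1 J2 J3.
Proof.
  intros h0 h1 h2 h3.
  assert (hS : 0 <= J1*J1+J2*J2+J3*J3) by nra.
  pose proof (Fgen (J1*1+J2*1+J3*1) _ hS h0) as G0.
  pose proof (Fgen (J1*1+J2*(-1)+J3*(-1)) _ hS h1) as G1.
  pose proof (Fgen (J1*(-1)+J2*1+J3*(-1)) _ hS h2) as G2.
  pose proof (Fgen (J1*(-1)+J2*(-1)+J3*1) _ hS h3) as G3.
  assert (F0 : J1+J2+J3 > 0 \/ J1*J2+J1*J3+J2*J3 < 0) by (destruct G0; [left|right]; nra).
  assert (F1 : J1-J2-J3 > 0 \/ J2*J3-J1*J2-J1*J3 < 0) by (destruct G1; [left|right]; nra).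
  assert (F2 : -J1+J2-J3 > 0 \/ J1*J3-J1*J2-J2*J3 < 0) by (destruct G2; [left|right]; nra).
  assert (F3 : -J1-J2+J3 > 0 \/ J1*J2-J1*J3-J2*J3 < 0) by (destruct G3; [left|right]; nra).
  pose proof (prod_pos J1 J2 J3 F0 F1 F2 F3) as hp.
  pose proof (K_pos J1 J2 J3 F0 F1 F2 F3) as hK.
  clear h0 h1 h2 h3 G0 G1 G2 G3 F0 F1 F2 F3.
  assert (n1 : J1 <> 0) by (intro e; rewrite e in hp; lra).
  assert (n2 : J2 <> 0) by (intro e; rewrite e in hp; lra).
  assert (n3 : J3 <> 0) by (intro e; rewrite e in hp; lra).
  set (A1 := J2*J3/J1). set (A2 := J1*J3/J2). set (A3 := J1*J2/J3).
  assert (hA1 : 0 < A1).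
  { replace A1 with ((J1*J2*J3)/(J1*J1)) by (unfold A1; field; auto).
    apply Rdiv_lt_0_compat; [lra | nra]. }
  set (uf := u_formula J1 J2 J3). set (vf := v_formula J1 J2 J3). set (wf := w_formula J1 J2 J3).
  assert (hdet : detG uf vf wf = 0) by (apply testdet; auto).
  assert (hE : J1*wf+J2*vf+J3*uf = -(A1+A2+A3)/2).
  { unfold uf, vf, wf, u_formula, v_formula, w_formula, A1, A2, A3. field. auto. }
  assert (hc1 : A1 + J3*uf + J2*vf = 0).
  { unfold uf, vf, wf, u_formula, v_formula, w_formula, A1, A2, A3. field. auto. }
  assert (hc2 : A1*uf + J3 + J2*wf = 0).
  { unfold uf, vf, wf, u_formula, v_formula, w_formula, A1, A2, A3. field. auto. }
  assert (hc3 : A1*vf + J3*wf + J2 = 0).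
  { unfold uf, vf, wf, u_formula, v_formula, w_formula, A1, A2, A3. field. auto. }
  assert (bu : 0 < 1 - uf^2).
  { unfold uf; rewrite test1 by auto. apply Rdiv_lt_0_compat; [lra|].
    assert (0 < (J2*J3)^2) by (apply sq_pos; apply Rmult_integral_contrapositive_currified; auto).
    assert (0 < (J1*J3)^2) by (apply sq_pos; apply Rmult_integral_contrapositive_currified; auto).
    nra. }
  assert (bv : 0 < 1 - vf^2).
  { unfold vf; rewrite test2 by auto. apply Rdiv_lt_0_compat; [lra|].
    assert (0 < (J2*J3)^2) by (apply sq_pos; apply Rmult_integral_contrapositive_currified; auto).
    assert (0 < (J1*J2)^2) by (apply sq_pos; apply Rmult_integral_contrapositive_currified; auto).
    nra. }
  assert (bw : 0 < 1 - wf^2).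
  { unfold wf; rewrite test3 by auto. apply Rdiv_lt_0_compat; [lra|].
    assert (0 < (J1*J3)^2) by (apply sq_pos; apply Rmult_integral_contrapositive_currified; auto).
    assert (0 < (J1*J2)^2) by (apply sq_pos; apply Rmult_integral_contrapositive_currified; auto).
    nra. }
  assert (Qid : forall t1 t2 t3, unit_vec t1 -> unit_vec t2 -> unit_vec t3 ->
     dot (comb A1 J3 J2 t1 t2 t3) (comb A1 J3 J2 t1 t2 t3)
       = 2*A1*(energy (J1,J2,J3) t1 t2 t3 + (A1+A2+A3)/2)).
  { intros t1 t2 t3 e1 e2 e3. unfold unit_vec in *.
    rewrite energy_eq, !dot_comb_l.
    rewrite !(dot_comm _ (comb _ _ _ _ _ _)), !dot_comb_l.
    rewrite (dot_comm t2 t1), (dot_comm t3 t1), (dot_comm t3 t2), e1, e2, e3.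
    unfold A1, A2, A3. field. auto. }
  assert (LB : forall t1 t2 t3, unit_vec t1 -> unit_vec t2 -> unit_vec t3 ->
     -(A1+A2+A3)/2 <= energy (J1,J2,J3) t1 t2 t3).
  { intros t1 t2 t3 e1 e2 e3. pose proof (Qid t1 t2 t3 e1 e2 e3) as q.
    pose proof (dot_self_nonneg (comb A1 J3 J2 t1 t2 t3)). nra. }
  assert (Ex : exists t1 t2 t3, unit_vec t1 /\ unit_vec t2 /\ unit_vec t3 /\
     energy (J1,J2,J3) t1 t2 t3 = -(A1+A2+A3)/2).
  { set (r := sqrt (1 - uf^2)).
    assert (hr : r*r = 1 - uf^2) by (apply sqrt_sqrt; lra).
    assert (hr0 : 0 < r) by (apply sqrt_lt_R0; lra).
    exists (1,0,0), (uf, r, 0), (vf, (wf - uf*vf)/r, 0).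
    split; [unfold unit_vec, dot; ring|].
    split; [unfold unit_vec, dot; lra|].
    split.
    { unfold unit_vec, dot.
      assert (hw : (wf-uf*vf)^2 = (1-uf^2)*(1-vf^2)) by (unfold detG in hdet; nra).
      replace ((wf - uf * vf) / r * ((wf - uf * vf) / r)) with ((wf-uf*vf)^2/(r*r)) by (field; lra).
      rewrite hw, hr. field. lra. }
    rewrite energy_eq. unfold dot. rewrite <- hE.
    field_simplify; [|lra]. field. lra. }
  split.
  - destruct Ex as [t1 [t2 [t3 [U1 [U2 [U3 En]]]]]].
    exists t1, t2, t3.
    split; [exact U1|]; split; [exact U2|]; split; [exact U3|].
    intros x1 x2 x3 e1 e2 e3. rewrite En. apply LB; auto.
  - intros s1 s2 s3 [e1 [e2 [e3 Hmin]]]. cbv zeta.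
    destruct Ex as [t1 [t2 [t3 [U1 [U2 [U3 En]]]]]].
    pose proof (Hmin t1 t2 t3 U1 U2 U3) as Hle. rewrite En in Hle.
    pose proof (Qid s1 s2 s3 e1 e2 e3) as q.
    set (V := comb A1 J3 J2 s1 s2 s3) in q.
    pose proof (dot_self_nonneg V) as q0.
    assert (hV : dot V V = 0).
    { assert (0 <= 2*A1*(-(A1+A2+A3)/2 - energy (J1, J2, J3) s1 s2 s3)) by (apply Rmult_le_pos; lra).
      lra. }
    unfold unit_vec in e1, e2, e3.
    assert (v1 : A1 + J3*dot s1 s2 + J2*dot s1 s3 = 0).
    { pose proof (dot_self_zero V s1 hV) as z. unfold V in z. rewrite dot_comb_l in z.
      rewrite e1, (dot_comm s2 s1), (dot_comm s3 s1) in z. lra. }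
    assert (v2 : A1*dot s1 s2 + J3 + J2*dot s2 s3 = 0).
    { pose proof (dot_self_zero V s2 hV) as z. unfold V in z. rewrite dot_comb_l in z.
      rewrite e2, (dot_comm s3 s2) in z. lra. }
    assert (v3 : A1*dot s1 s3 + J3*dot s2 s3 + J2 = 0).
    { pose proof (dot_self_zero V s3 hV) as z. unfold V in z. rewrite dot_comb_l in z.
      rewrite e3 in z. lra. }
    destruct (lin_unique A1 J2 J3 (dot s1 s2 - uf) (dot s1 s3 - vf) (dot s2 s3 - wf))
      as [du [dv dw]]; auto; try lra.
    assert (hu : dot s1 s2 = uf) by lra.
    assert (hv : dot s1 s3 = vf) by lra.
    assert (hw : dot s2 s3 = wf) by lra.
    assert (hEs : energy (J1,J2,J3) s1 s2 s3 = J1*wf+J2*vf+J3*uf)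
      by (rewrite energy_eq, hu, hv, hw; ring).
    rewrite hu, hv, hw.
    split.
    { exists (cross s1 s2). split; [|split; [apply cross_l|split; [apply cross_r|]]].
      - intro e. pose proof (cross_norm s1 s2) as cn. rewrite e, e1, e2, hu in cn.
        unfold dot in cn. lra.
      - pose proof (dot_self_zero V (cross s1 s2) hV) as z. unfold V in z. rewrite dot_comb_l in z.
        rewrite !(dot_comm _ (cross s1 s2)), cross_l, cross_r in z.
        apply (Rmult_eq_reg_l J2); [lra|auto]. }
    split; [exact hdet|].
    split; [apply bnd; exact bu|]. split; [apply bnd; exact bv|]. split; [apply bnd; exact bw|].
    split.
    { assert (hD : J1 ^ 4 * (J2 ^ 2 - J3 ^ 2) ^ 2 - 2 * J1 ^ 2 * J2 ^ 2 * J3 ^ 2 * (J2 ^ 2 + J3 ^ 2)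
                   + J2 ^ 4 * J3 ^ 4 <> 0).
      { replace (J1 ^ 4 * (J2 ^ 2 - J3 ^ 2) ^ 2 - 2 * J1 ^ 2 * J2 ^ 2 * J3 ^ 2 * (J2 ^ 2 + J3 ^ 2)
                   + J2 ^ 4 * J3 ^ 4) with (- Kp J1 J2 J3) by (unfold Kp; ring). lra. }
      exists (mu_formula J1 J2 J3).
      split; [|split; [|split]]; try reflexivity;
      [apply (mu1 J1 J2 J3 n1 n2 n3 hD) | apply (mu1 J1 J2 J3 n1 n2 n3 hD) | apply (mu1 J1 J2 J3 n1 n2 n3 hD)]. }
    split; [reflexivity|]. split; [reflexivity|]. split; [reflexivity|].
    exact hEs.
Qed.
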